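(* Let $\alpha\in(0,1]$ be rational, $\lambda\in\mathbb N$, $P$ a profile, and $N'\subseteq N$ a group that is $(\alpha,\lambda)$-significant in $P$. Let $r$ be any ranking that Reverse SeqPAV may output on $P$ (under any tie-breaking). Then there exists a real number $y\ge\lambda$ such that $\mathrm{avg}(N',r_{\le k})\ge y$ for $k=\min(m,\lfloor y/\alpha\rfloor)$.
   Context: Let $N=[n]$ be a finite set of voters and $A$ a finite set of $m$ alternatives; a profile $P=(A_1,\dots,A_n)$ gives each voter $i$ a non-empty approval set $A_i\subseteq A$. A ranking $r=(r_1,\dots,r_m)$ is a linear order of $A$ and $r_{\le k}=\{r_1,\dots,r_k\}$. For nonempty $N'\subseteq N$ and $S\subseteq A$, $\mathrm{avg}(N',S)=\frac1{|N'|}\sum_{i\in N'}|A_i\cap S|$. The cohesiveness of $N'$ is $\lambda(N')=|\bigcap_{i\in N'}A_i|$; $N'$ is $(\alpha,\lambda)$-significant in $P$ if $|N'|=\lceil\alpha n\rceil$ and $\lambda(N')\ge\lambda$. For $S\subseteq A$, $w_{\mathrm{PAV}}(S)=\sum_{i\in N}\sum_{j=1}^{|A_i\cap S|}\frac1j$. Reverse SeqPAV builds a ranking from the bottom: it starts with $S=A$ and the empty ranking, and at each step picks $a\in S$ minimizing $w_{\mathrm{PAV}}(S)-w_{\mathrm{PAV}}(S\setminus\{a\})$ (ties broken arbitrarily), removes $a$ from $S$ and prepends it to the ranking, until $S$ is empty. *)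

(* Defs.v *)
From HB Require Import structures.
From mathcomp Require Import all_boot all_order all_algebra.
Set Implicit Arguments. Unset Strict Implicit. Unset Printing Implicit Defensive.
Import Order.TTheory GRing.Theory Num.Theory.
Local Open Scope ring_scope.

(* Voters are 'I_n, alternatives a finType Alt (m = #|Alt|),
   a profile is P : 'I_n -> {set Alt}.  Numeric quantities live in an
   arbitrary archimedean field R (e.g. a subfield of the reals). *)

Definition profile_ok (n : nat) (Alt : finType) (P : 'I_n -> {set Alt}) : Prop :=
  forall i, P i != set0.

Definition avg (R : numFieldType) (n : nat) (Alt : finType)
  (P : 'I_n -> {set Alt}) (N' : {set 'I_n}) (S : {set Alt}) : R :=
  (\sum_(i in N') (#|P i :&: S|)%:R) / (#|N'|)%:R.

Definition cohesiveness (n : nat) (Alt : finType)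
  (P : 'I_n -> {set Alt}) (N' : {set 'I_n}) : nat :=
  #|\bigcap_(i in N') P i|.

Definition significant (n : nat) (Alt : finType) (P : 'I_n -> {set Alt})
  (alpha : rat) (lam : nat) (N' : {set 'I_n}) : Prop :=
  (#|N'|%:Z = Num.ceil (alpha * n%:R)) /\ (lam <= cohesiveness P N')%N.

Definition wPAV (R : numFieldType) (n : nat) (Alt : finType)
  (P : 'I_n -> {set Alt}) (S : {set Alt}) : R :=
  \sum_(i < n) \sum_(1 <= j < (#|P i :&: S|).+1) (j%:R)^-1.

Definition marg (R : numFieldType) (n : nat) (Alt : finType)
  (P : 'I_n -> {set Alt}) (S : {set Alt}) (a : Alt) : R :=
  wPAV R P S - wPAV R P (S :\ a).

(* revpav R P S r : r is a possible ranking of the remaining set S produced by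
   Reverse SeqPAV (any tie-breaking).  The algorithm removes a minimizer a of
   the marginal contribution from S and prepends it to the ranking built so
   far; hence the final ranking is (ranking of S :\ a) followed by a. *)
Inductive revpav (R : numFieldType) (n : nat) (Alt : finType)
  (P : 'I_n -> {set Alt}) : {set Alt} -> seq Alt -> Prop :=
| revpav_nil : revpav R P set0 [::]
| revpav_step (S : {set Alt}) (a : Alt) (r : seq Alt) :
    a \in S ->
    (forall b, b \in S -> marg R P S a <= marg R P S b) ->
    revpav R P (S :\ a) r ->
    revpav R P S (rcons r a).

Definition revseqpav_output (R : numFieldType) (n : nat) (Alt : finType)
  (P : 'I_n -> {set Alt}) (r : seq Alt) : Prop :=
  revpav R P [set: Alt] r.

Definition top_k (Alt : finType) (r : seq Alt) (k : nat) : {set Alt} :=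
  [set x in take k r].

(* Main.v *)
Require Import Defs.
From HB Require Import structures.
From mathcomp Require Import all_boot all_order all_algebra.
From mathcomp Require Import ring lra zify.
Import Order.TTheory GRing.Theory Num.Theory.
Local Open Scope ring_scope.

Section Aux.
Variables (R : archiRealFieldType) (n : nat) (Alt : finType)
  (P : 'I_n -> {set Alt}).

Lemma revpav_set S r : revpav R P S r -> [set x in r] = S /\ size r = #|S|.
Proof.
elim=> [|S' a r' aS _ _ [IH1 IH2]]; first by split; [apply/setP=> x; rewrite !inE | rewrite cards0].
split.
  apply/setP=> x; rewrite inE mem_rcons in_cons.
  have := IH1; move/setP/(_ x); rewrite !inE => ->.
  by case: eqP => [->|] //=.
by rewrite size_rcons IH2 (cardsD1 a S') aS.
Qed.

Lemma marg_eq S a : marg R P S a =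
  \sum_(i < n) (if a \in P i :&: S then (#|P i :&: S|%:R)^-1 else 0).
Proof.
rewrite /marg /wPAV -sumrB; apply: eq_bigr => i _.
have E : #|P i :&: S| = ((a \in P i :&: S) + #|P i :&: (S :\ a)|)%N.
  by rewrite setIDA -cardsD1.
case: (a \in P i :&: S) E => /= E; rewrite E.
  by rewrite add1n big_nat_recr //=; ring.
by rewrite add0n subrr.
Qed.

Lemma sum_marg (S : {set Alt}) : \sum_(b in S) marg R P S b <= n%:R.
Proof.
under eq_bigr => b _ do rewrite marg_eq.
rewrite exchange_big /=.
rewrite -[n in n%:R]card_ord -sumr_const.
apply: ler_sum => i _.
rewrite -big_mkcondr /=.
rewrite (eq_bigl (fun b => b \in P i :&: S)); last first.
  by move=> b; rewrite !inE; case: (b \in P i); case: (b \in S).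
rewrite sumr_const -(mulr_natr (_^-1)).
case: (posnP #|P i :&: S|) => [->|h]; first by rewrite mulr0.
by rewrite mulVf // pnatr_eq0 -lt0n.
Qed.

Lemma hm (I : finType) (A : {set I}) (x : I -> R) :
  (forall i, i \in A -> 0 < x i) -> (0 < #|A|)%N ->
  (#|A|%:R) ^+ 2 <= (\sum_(i in A) x i) * (\sum_(i in A) (x i)^-1).
Proof.
move=> xpos A0.
set X := \sum_(i in A) x i.
have X0 : 0 < X.
  case/card_gt0P: A0 => j jA.
  rewrite /X (bigD1 j) //= ltr_wpDr // ?xpos //.
  by apply: sumr_ge0 => i /andP[iA _]; apply/ltW/xpos.
set t := X / #|A|%:R.
have N0 : 0 < (#|A|%:R : R) by rewrite ltr0n.
have t0 : 0 < t by rewrite divr_gt0.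
have tang : forall i, i \in A -> 2 * t^-1 - x i * t^-2 <= (x i)^-1.
  move=> i iA; have xi := xpos i iA.
  rewrite -subr_ge0.
  have -> : (x i)^-1 - (2 * t^-1 - x i * t^-2) = (x i)^-1 * (1 - x i * t^-1) ^+ 2.
    by field; rewrite ?gt_eqF.
  by rewrite mulr_ge0 ?sqr_ge0 // invr_ge0 ltW.
have S1 : \sum_(i in A) (2 * t^-1 - x i * t^-2) <= \sum_(i in A) (x i)^-1.
  by apply: ler_sum => i iA; apply: tang.
have eX : X = t * #|A|%:R by rewrite /t divfK // gt_eqF.
have e2 : \sum_(i in A) (2 * t^-1 - x i * t^-2) = #|A|%:R / t.
  rewrite sumrB sumr_const -big_distrl /= -/X eX -mulr_natr.
  by field; rewrite gt_eqF.
rewrite e2 in S1.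
have := ler_wpM2l (ltW (mulr_gt0 t0 N0)) S1.
rewrite -eX.
suff -> : X * (#|A|%:R / t) = #|A|%:R ^+ 2 by [].
by rewrite eX; field; rewrite gt_eqF.
Qed.

Lemma marg_lb (N' : {set 'I_n}) (S : {set Alt}) a : a \in S -> a \in \bigcap_(i in N') P i ->
  \sum_(i in N') (#|P i :&: S|%:R : R)^-1 <= marg R P S a.
Proof.
move=> aS aC; rewrite marg_eq [X in _ <= X](bigID (mem N')) /=.
apply: ler_wpDr.
  by apply: sumr_ge0 => i _; case: ifP => // _; rewrite invr_ge0 ler0n.
apply: ler_sum => i iN.
by rewrite inE aS (bigcapP aC) .
Qed.

Lemma no_remove (N' : {set 'I_n}) (al : R) (S : {set Alt}) a : a \in S ->
  a \in \bigcap_(i in N') P i -> (0 < #|N'|)%N -> al * n%:R <= #|N'|%:R ->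
  (forall b, b \in S -> marg R P S a <= marg R P S b) ->
  avg R P N' S < al * #|S|%:R -> False.
Proof.
move=> aS aC N0 hal hmin havg.
set x := fun i => (#|P i :&: S|%:R : R).
have xpos : forall i, i \in N' -> 0 < x i.
  move=> i iN; rewrite /x ltr0n; apply/card_gt0P; exists a.
  by rewrite inE aS (bigcapP aC).
have H1 := @hm _ _ _ xpos N0.
have H2 := @marg_lb N' S a aS aC.
have H3 : #|S|%:R * marg R P S a <= n%:R.
  apply: le_trans (sum_marg S).
  rewrite mulr_natl -sumr_const; apply: ler_sum => b bS; exact: hmin.
set X := \sum_(i in N') x i in H1.
set V := \sum_(i in N') (x i)^-1 in H1 H2.
have X0 : 0 <= X by apply: sumr_ge0 => i iN; exact/ltW/xpos.
have H4 : X < al * #|S|%:R * #|N'|%:R.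
  move: havg; rewrite /avg -/x -/X ltr_pdivrMr // ltr0n //.
have S0 : 0 < (#|S|%:R : R) by rewrite ltr0n; apply/card_gt0P; exists a.
have NN : 0 < (#|N'|%:R : R) by rewrite ltr0n.
have H5 : #|S|%:R * V <= n%:R.
  apply: le_trans H3; apply: ler_wpM2l => //; exact: ltW.
set s := (#|S|%:R : R) in S0 H4 H5.
set k := (#|N'|%:R : R) in NN H1 H4 hal.
have V0 : 0 <= V by apply: sumr_ge0 => i iN; rewrite invr_ge0; exact/ltW/xpos.
have n0 : 0 < (n%:R : R).
  case/card_gt0P: N0 => i _; rewrite ltr0n; exact: (leq_ltn_trans (leq0n i) (ltn_ord i)).
have Ha : s * k ^+ 2 <= s * (X * V) by rewrite ler_wpM2l // ltW.
have Hb : X * (s * V) <= X * n%:R by rewrite ler_wpM2l.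
have Hc : X * n%:R < al * s * k * n%:R by rewrite ltr_pM2r.
have Hd : s * k * (al * n%:R) <= s * k * k by rewrite ler_wpM2l // ltW // mulr_gt0.
have : s * k ^+ 2 < s * k ^+ 2.
  apply: (le_lt_trans Ha); rewrite mulrCA; apply: (le_lt_trans Hb).
  apply: (lt_le_trans Hc).
  have -> : al * s * k * n%:R = s * k * (al * n%:R) by ring.
  by apply: (le_trans Hd); rewrite expr2 mulrA.
by rewrite ltxx.
Qed.

Lemma avg_ge0 (N' : {set 'I_n}) (T : {set Alt}) : 0 <= avg R P N' T.
Proof. by rewrite /avg divr_ge0 // sumr_ge0. Qed.

Lemma avg_mono (N' : {set 'I_n}) (T T' : {set Alt}) : T \subset T' ->
  avg R P N' T <= avg R P N' T'.
Proof.
move=> TT; rewrite /avg ler_wpM2r ?invr_ge0 //.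
by apply: ler_sum => i _; rewrite ler_nat subset_leq_card // setIS.
Qed.

Lemma top_k_mono (r : seq Alt) s k : (s <= k)%N -> top_k r s \subset top_k r k.
Proof.
move=> hsk; apply/subsetP => x; rewrite !inE -(take_takel r hsk); exact: mem_take.
Qed.

Lemma key (N' : {set 'I_n}) (al : R) : (0 < #|N'|)%N -> al * n%:R <= #|N'|%:R ->
  forall S r, revpav R P S r -> \bigcap_(i in N') P i \subset S ->
  exists s, [/\ (s <= size r)%N, \bigcap_(i in N') P i \subset top_k r s &
     al * s%:R <= avg R P N' (top_k r s)].
Proof.
move=> N0 hal S r; elim.
  move=> CS; exists 0%N; split => //.
  by rewrite mulr0 avg_ge0.
move=> S' a r' aS hmin hrev IH CS.
have [e1 e2] := @revpav_set _ _ (revpav_step aS hmin hrev).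
case: (leP (al * #|S'|%:R) (avg R P N' S')) => h.
  exists (size (rcons r' a)); rewrite /top_k take_size e1 e2; split => //.
have aC : a \notin \bigcap_(i in N') P i.
  by apply/negP => aC; exact: (@no_remove N' al S' a aS aC N0 hal hmin h).
have CS' : \bigcap_(i in N') P i \subset S' :\ a.
  apply/subsetP => x xC; rewrite !inE (subsetP CS) // andbT.
  by apply/eqP => exa; move: aC; rewrite -exa xC.
have [s [hs hC hav]] := IH CS'.
have et : top_k (rcons r' a) s = top_k r' s by rewrite /top_k -cats1 takel_cat.
exists s; rewrite et size_rcons; split => //; exact: leqW.
Qed.

End Aux.

Theorem theorem6 (R : archiRealFieldType) (n : nat) (Alt : finType)
    (P : 'I_n -> {set Alt}) (alpha : rat) (lam : nat) (N' : {set 'I_n})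
    (r : seq Alt) :
  (0 < n)%N ->
  profile_ok P ->
  0 < alpha -> alpha <= 1 ->
  significant P alpha lam N' ->
  revseqpav_output R P r ->
  exists y : R, lam%:R <= y /\
    y <= avg R P N' (top_k r (minn #|Alt| `|Num.floor (y / ratr alpha)|%N)).
Proof.
move=> n0 _ a0 a1 [hN hlam] hr.
have an0 : 0 < alpha * n%:R by rewrite mulr_gt0 // ltr0n.
have N0 : (0 < #|N'|)%N.
  rewrite lt0n; apply/negP => /eqP e; move: hN; rewrite e => /esym/eqP.
  rewrite eq_le ceil_le0 => /andP[h _]; by move: h; rewrite leNgt an0.
have hal : ratr alpha * n%:R <= (#|N'|%:R : R).
  rewrite -[(#|N'|%:R : R)]ratr_nat -[(n%:R : R)]ratr_nat -rmorphM ler_rat.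
  have := ceil_ge (alpha * n%:R); rewrite -hN.
  by rewrite -pmulrn.
have [s [hs hC hav]] := @key R n Alt P N' (ratr alpha) N0 hal _ _ hr (subsetT _).
set T := top_k r s in hC hav.
exists (avg R P N' T); split.
  rewrite /avg ler_pdivlMr ?ltr0n //.
  rewrite mulr_natr -sumr_const; apply: ler_sum => i iN.
  rewrite ler_nat; apply: leq_trans hlam _; apply: subset_leq_card.
  by rewrite subsetI hC andbT; apply/subsetP => x xC; exact: (bigcapP xC).
apply: avg_mono; apply: top_k_mono.
have [e1 e2] := @revpav_set R n Alt P _ _ hr.
rewrite leq_min -cardsT -e2 hs /=.
have al0 : 0 < (ratr alpha : R) by rewrite ltr0q.
have : (s%:Z)%:~R <= avg R P N' T / ratr alpha.
  by rewrite ler_pdivlMr // mulrC.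
rewrite -floor_ge_int.
move: (Num.floor _) => [m|m] /=; [by rewrite lez_nat | by []].
Qed.
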